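(* Let $f:\mathbb{R}^n\to(-\infty,\infty]$ be a function, let $(\bar x,\bar x^* )\in\operatorname{gph}\partial f$, let $g:\mathbb{R}^n\to\mathbb{R}$ be twice continuously differentiable and put $h:=f+g$. Let \[\bar A=\begin{pmatrix} I&0\\ \nabla^2 g(\bar x)& I\end{pmatrix}\in\mathbb{R}^{2n\times 2n}.\] Then, writing $\bar y^*:=\bar x^*+\nabla g(\bar x)$, \begin{align*} &T^h_{\operatorname{gph}\partial h}(\bar x,\bar y^* )=\bar A\,T^f_{\operatorname{gph}\partial f}(\bar x,\bar x^* ),\\ &\widehat N^h_{\operatorname{gph}\partial h}(\bar x,\bar y^* )=\bar A^{-T}\widehat N^f_{\operatorname{gph}\partial f}(\bar x,\bar x^* ),\qquad N^h_{\operatorname{gph}\partial h}(\bar x,\bar y^* )=\bar A^{-T} N^f_{\operatorname{gph}\partial f}(\bar x,\bar x^* ),\\ &\operatorname{gph} D_h(\partial h)(\bar x,\bar y^* )=\bar A\,\operatorname{gph} D_f(\partial f)(\bar x,\bar x^* ),\\ &\operatorname{gph} \widehat D^*_h(\partial h)(\bar x,\bar y^* )=\bar A\,\operatorname{gph} \widehat D^*_f(\partial f)(\bar x,\bar x^* ),\qquad \operatorname{gph} D^*_h(\partial h)(\bar x,\bar y^* )=\bar A\,\operatorname{gph} D^*_f(\partial f)(\bar x,\bar x^* ),\\ &\mathcal{S}_h(\partial h)(\bar x,\bar y^* )=\{\bar A L\mid L\in \mathcal{S}_f(\partial f)(\bar x,\bar x^* )\},\qquad \mathcal{S}^*_h(\partial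 h)(\bar x,\bar y^* )=\{\bar A L^*\mid L\in \mathcal{S}_f(\partial f)(\bar x,\bar x^* )\}. \end{align*}
   Context: For a function $\varphi:\mathbb{R}^n\to(-\infty,\infty]$ finite at $x$, the regular subdifferential is $\widehat\partial\varphi(x)=\{x^*\mid \liminf_{y\to x}\frac{\varphi(y)-\varphi(x)-\langle x^*,y-x\rangle}{\|y-x\|}\ge 0\}$, and the (limiting) subdifferential $\partial\varphi(x)$ is the set of $x^*$ for which there exist $x_k\to x$ with $\varphi(x_k)\to\varphi(x)$ and $x_k^*\to x^*$, $x_k^*\in\widehat\partial\varphi(x_k)$. We write $(x_k,x_k^* )\xrightarrow{\varphi}(x,x^* )$ ($\varphi$-attentive convergence in $\operatorname{gph}\partial\varphi$) if $(x_k,x_k^* )\in\operatorname{gph}\partial\varphi$, $(x_k,x_k^* )\to(x,x^* )$ and $\varphi(x_k)\to\varphi(x)$. For $(x,x^* )\in\operatorname{gph}\partial\varphi$: - the $\varphi$-attentive tangent cone $T^\varphi_{\operatorname{gph}\partial\varphi}(x,x^* )$ is the set of $(u,u^* )$ such that there exist $t_k\downarrow0$ and $(x_k,x_k^* )\xrightarrow{\varphi}(x,x^* )$ with $(u,u^* )=\lim_k ((x_k,x_k^* )-(x,x^* ))/t_k$; - $\widehat N^\varphi_{\operatorname{gph}\partial\varphi}(x,x^* )$ is the polar cone of $T^\varphi_{\operatorname{gph}\partial\varphi}(x,x^* )$, and $N^\varphi_{\operatorname{gph}\partial\varphi}(x,x^* )$ is the set of limits of sequences $(v_k)$ with $v_k\in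 \widehat N^\varphi_{\operatorname{gph}\partial\varphi}(x_k,x_k^* )$ for some $(x_k,x_k^* )\xrightarrow{\varphi}(x,x^* )$; - $\operatorname{gph}D_\varphi(\partial\varphi)(x,x^* )=T^\varphi_{\operatorname{gph}\partial\varphi}(x,x^* )$, $\operatorname{gph}\widehat D^*_\varphi(\partial\varphi)(x,x^* )=\{(u,u^* )\mid (u^*,-u)\in \widehat N^\varphi_{\operatorname{gph}\partial\varphi}(x,x^* )\}$, $\operatorname{gph}D^*_\varphi(\partial\varphi)(x,x^* )=\{(u,u^* )\mid (u^*,-u)\in N^\varphi_{\operatorname{gph}\partial\varphi}(x,x^* )\}$; - $\mathcal Z_{nn}$ is the set of $n$-dimensional subspaces of $\mathbb{R}^n\times\mathbb{R}^n$ with metric $d(L_1,L_2)=\|P_{L_1}-P_{L_2}\|$ ($P_L$ orthogonal projection onto $L$); for $L\in\mathcal Z_{nn}$ the adjoint subspace is $L^*=\{(v^*,u^* )\mid (u^*,-v^* )\in L^\perp\}$; - $\mathcal O^\varphi_{\partial\varphi}$ is the set of $(x,x^* )\in\operatorname{gph}\partial\varphi$ with $T^\varphi_{\operatorname{gph}\partial\varphi}(x,x^* )\in\mathcal Z_{nn}$; the $\varphi$-attentive SC derivative $\mathcal S_\varphi(\partial\varphi)(x,x^* )$ is the set of $L\in\mathcal Z_{nn}$ for which there are $(x_k,x_k^* )\in\mathcal O^\varphi_{\partial\varphi}$ with $(x_k,x_k^* )\xrightarrow{\varphi}(x,x^* )$ and $d(L,T^\varphi_{\operatorname{gph}\partial\varphi}(x_k,x_k^*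 ))\to 0$; and $\mathcal S^*_\varphi(\partial\varphi)(x,x^* )=\{L^*\mid L\in\mathcal S_\varphi(\partial\varphi)(x,x^* )\}$. These are applied with $\varphi=f$ and $\varphi=h$. $A^{-T}$ denotes $(A^T)^{-1}$. *)

(* Defs.v *)
(* MathComp + MathComp-Analysis, over an abstract R : realType.
   R^n is modelled by column vectors 'cV[R]_n, R^n x R^n by 'cV[R]_(n+n)
   (a pair (x, x^* ) is col_mx x xs. *)
From HB Require Import structures.
From mathcomp Require Import all_boot all_order all_algebra.
From mathcomp Require Import all_classical all_reals all_analysis.
Set Implicit Arguments. Unset Strict Implicit. Unset Printing Implicit Defensive.
Import Order.TTheory GRing.Theory Num.Theory.
Import numFieldNormedType.Exports.
Local Open Scope classical_set_scope.
Local Open Scope ring_scope.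

Definition dotv (R : realType) (m : nat) (u v : 'cV[R]_m) : R :=
  \sum_(i < m) u i 0 * v i 0.
Definition enorm (R : realType) (m : nat) (u : 'cV[R]_m) : R :=
  Num.sqrt (dotv u u).

(* regular subdifferential; the condition "liminf_{y->x} ratio >= 0"
   written out in epsilon-delta form *)
Definition reg_subdiff (R : realType) (n : nat) (phi : 'cV[R]_n -> \bar R)
  (x : 'cV[R]_n) : set 'cV[R]_n :=
  [set xs | phi x \is a fin_num /\
    forall eps : R, 0 < eps -> exists2 delta : R, 0 < delta &
      forall y : 'cV[R]_n, 0 < enorm (y - x) < delta ->
        (phi x + (dotv xs (y - x) - eps * enorm (y - x))%:E <= phi y)%E].

Definition lim_subdiff (R : realType) (n : nat) (phi : 'cV[R]_n -> \bar R)
  (x : 'cV[R]_n) : set 'cV[R]_n :=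
  [set xs | phi x \is a fin_num /\
    exists (xk xsk : nat -> 'cV[R]_n),
      [/\ xk @ \oo --> x, (fun k => phi (xk k)) @ \oo --> phi x,
          xsk @ \oo --> xs & forall k, reg_subdiff phi (xk k) (xsk k)]].

Definition gph_sd (R : realType) (n : nat) (phi : 'cV[R]_n -> \bar R)
  : set 'cV[R]_(n + n) :=
  [set z | lim_subdiff phi (usubmx z) (dsubmx z)].

Definition att_conv (R : realType) (n : nat) (phi : 'cV[R]_n -> \bar R)
  (zk : nat -> 'cV[R]_(n + n)) (z : 'cV[R]_(n + n)) : Prop :=
  [/\ forall k, gph_sd phi (zk k), zk @ \oo --> z &
      (fun k => phi (usubmx (zk k))) @ \oo --> phi (usubmx z)].

Definition att_tangent (R : realType) (n : nat) (phi : 'cV[R]_n -> \bar R)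
  (z : 'cV[R]_(n + n)) : set 'cV[R]_(n + n) :=
  [set w | exists (tk : nat -> R) (zk : nat -> 'cV[R]_(n + n)),
     [/\ forall k, 0 < tk k, tk @ \oo --> 0, att_conv phi zk z &
         (fun k => (tk k)^-1 *: (zk k - z)) @ \oo --> w]].

Definition att_rnormal (R : realType) (n : nat) (phi : 'cV[R]_n -> \bar R)
  (z : 'cV[R]_(n + n)) : set 'cV[R]_(n + n) :=
  [set v | forall w, att_tangent phi z w -> dotv v w <= 0].

Definition att_normal (R : realType) (n : nat) (phi : 'cV[R]_n -> \bar R)
  (z : 'cV[R]_(n + n)) : set 'cV[R]_(n + n) :=
  [set v | exists (zk vk : nat -> 'cV[R]_(n + n)),
     [/\ att_conv phi zk z, vk @ \oo --> v &
         forall k, att_rnormal phi (zk k) (vk k)]].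

Definition swapneg (R : realType) (n : nat) (w : 'cV[R]_(n + n)) : 'cV[R]_(n + n) :=
  col_mx (dsubmx w) (- usubmx w).

Definition gph_D (R : realType) (n : nat) (phi : 'cV[R]_n -> \bar R)
  (z : 'cV[R]_(n + n)) : set 'cV[R]_(n + n) := att_tangent phi z.
Definition gph_rDstar (R : realType) (n : nat) (phi : 'cV[R]_n -> \bar R)
  (z : 'cV[R]_(n + n)) : set 'cV[R]_(n + n) :=
  [set w | att_rnormal phi z (swapneg w)].
Definition gph_Dstar (R : realType) (n : nat) (phi : 'cV[R]_n -> \bar R)
  (z : 'cV[R]_(n + n)) : set 'cV[R]_(n + n) :=
  [set w | att_normal phi z (swapneg w)].

Definition is_Znn (R : realType) (n : nat) (L : set 'cV[R]_(n + n)) : Prop :=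
  exists M : 'M[R]_(n + n, n), \rank M = n /\ L = [set M *m c | c in [set: 'cV[R]_n]].

(* orthogonal projection matrix onto L (meaningful when L is a subspace) *)
Definition proj_mx (R : realType) (m : nat) (L : set 'cV[R]_m) : 'M[R]_m :=
  xget 0 [set P : 'M[R]_m | [/\ P^T = P, P *m P = P &
                               [set P *m z | z in [set: 'cV[R]_m]] = L]].

Definition opnorm (R : realType) (m : nat) (M : 'M[R]_m) : R :=
  sup [set enorm (M *m z) | z in [set z : 'cV[R]_m | enorm z <= 1]].

Definition dZ (R : realType) (m : nat) (L1 L2 : set 'cV[R]_m) : R :=
  opnorm (proj_mx L1 - proj_mx L2).

Definition O_set (R : realType) (n : nat) (phi : 'cV[R]_n -> \bar R)
  : set 'cV[R]_(n + n) :=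
  [set z | gph_sd phi z /\ is_Znn (att_tangent phi z)].

Definition SC (R : realType) (n : nat) (phi : 'cV[R]_n -> \bar R)
  (z : 'cV[R]_(n + n)) : set (set 'cV[R]_(n + n)) :=
  [set L | is_Znn L /\ exists zk : nat -> 'cV[R]_(n + n),
     [/\ forall k, O_set phi (zk k), att_conv phi zk z &
         (fun k => dZ L (att_tangent phi (zk k))) @ \oo --> (0 : R)]].

Definition adjoint (R : realType) (n : nat) (L : set 'cV[R]_(n + n))
  : set 'cV[R]_(n + n) :=
  [set w | forall v, L v -> dotv (swapneg w) v = 0].

Definition SCstar (R : realType) (n : nat) (phi : 'cV[R]_n -> \bar R)
  (z : 'cV[R]_(n + n)) : set (set 'cV[R]_(n + n)) :=
  (@adjoint R n) @` SC phi z.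

Definition C2_with (R : realType) (n : nat) (g : 'cV[R]_n -> R)
  (G : 'cV[R]_n -> 'cV[R]_n) (H : 'cV[R]_n -> 'M[R]_n) : Prop :=
  [/\ forall x, differentiable g x /\ ('d g x : 'cV[R]_n -> R) =1 dotv (G x),
      forall x, differentiable G x /\
                ('d G x : 'cV[R]_n -> 'cV[R]_n) =1 (fun v => H x *m v) &
      continuous H].

(* Main.v *)
Require Import Defs.
From HB Require Import structures.
From mathcomp Require Import all_boot all_order all_algebra.
From mathcomp Require Import all_classical all_reals all_analysis.
From mathcomp Require Import lra ring.
Import Order.TTheory GRing.Theory Num.Theory.
Import numFieldNormedType.Exports.
Local Open Scope classical_set_scope.
Local Open Scope ring_scope.
Set Implicit Arguments. Unset Strict Implicit. Unset Printing Implicit Defensive.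

Section VecBasics.
Variable R : realType.

Lemma dotvE (m : nat) (u v : 'cV[R]_m) : dotv u v = (u^T *m v) 0 0.
Proof. by rewrite /dotv mxE; apply: eq_bigr => i _; rewrite mxE. Qed.

Lemma dotvC (m : nat) (u v : 'cV[R]_m) : dotv u v = dotv v u.
Proof. by rewrite /dotv; apply: eq_bigr => i _; rewrite mulrC. Qed.

Lemma dotv_mulmx (m k : nat) (M : 'M[R]_(m, k)) (u : 'cV[R]_k) (v : 'cV[R]_m) :
  dotv (M *m u) v = dotv u (M^T *m v).
Proof. by rewrite !dotvE trmx_mul mulmxA. Qed.

Lemma dotvDl (m : nat) (u w v : 'cV[R]_m) : dotv (u + w) v = dotv u v + dotv w v.
Proof. by rewrite /dotv -big_split; apply: eq_bigr => i _; rewrite mxE mulrDl. Qed.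

Lemma dotvZl (m : nat) (a : R) (u v : 'cV[R]_m) : dotv (a *: u) v = a * dotv u v.
Proof. by rewrite /dotv mulr_sumr; apply: eq_bigr => i _; rewrite mxE mulrA. Qed.

Lemma dotvNl (m : nat) (u v : 'cV[R]_m) : dotv (- u) v = - dotv u v.
Proof. by rewrite -scaleN1r dotvZl mulN1r. Qed.

Lemma dotvBl (m : nat) (u w v : 'cV[R]_m) : dotv (u - w) v = dotv u v - dotv w v.
Proof. by rewrite dotvDl dotvNl. Qed.

Lemma dotvDr (m : nat) (u w v : 'cV[R]_m) : dotv v (u + w) = dotv v u + dotv v w.
Proof. by rewrite dotvC dotvDl !(dotvC v). Qed.

Lemma dotvZr (m : nat) (a : R) (u v : 'cV[R]_m) : dotv v (a *: u) = a * dotv v u.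
Proof. by rewrite dotvC dotvZl dotvC. Qed.

Lemma dotvNr (m : nat) (u v : 'cV[R]_m) : dotv v (- u) = - dotv v u.
Proof. by rewrite dotvC dotvNl dotvC. Qed.

Lemma dotvBr (m : nat) (u w v : 'cV[R]_m) : dotv v (u - w) = dotv v u - dotv v w.
Proof. by rewrite dotvDr dotvNr. Qed.

Lemma dotv0l (m : nat) (v : 'cV[R]_m) : dotv 0 v = 0.
Proof. by rewrite /dotv big1 // => i _; rewrite mxE mul0r. Qed.

Lemma dotv0r (m : nat) (v : 'cV[R]_m) : dotv v 0 = 0.
Proof. by rewrite dotvC dotv0l. Qed.

Lemma dotvv (m : nat) (u : 'cV[R]_m) : dotv u u = \sum_i (u i 0) ^+ 2.
Proof. by []. Qed.

Lemma dotvv_ge0 (m : nat) (u : 'cV[R]_m) : 0 <= dotv u u.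
Proof. by apply: sumr_ge0 => i _; rewrite -expr2 sqr_ge0. Qed.

Lemma enorm_ge0 (m : nat) (u : 'cV[R]_m) : 0 <= enorm u.
Proof. exact: sqrtr_ge0. Qed.

Lemma sqr_enorm (m : nat) (u : 'cV[R]_m) : enorm u ^+ 2 = dotv u u.
Proof. by rewrite /enorm sqr_sqrtr // dotvv_ge0. Qed.

Lemma coord_le_enorm (m : nat) (u : 'cV[R]_m) i : `|u i 0| <= enorm u.
Proof.
rewrite /enorm -sqrtr_sqr ler_sqrt ?dotvv_ge0 // /dotv (bigD1 i) //= expr2 lerDl.
by apply: sumr_ge0 => j _; rewrite -expr2 sqr_ge0.
Qed.

Lemma coord_le_mxnorm (p q : nat) (M : 'M[R]_(p, q)) i j : `|M i j| <= `|M|.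
Proof.
change (`|M i j| <= mx_norm M); rewrite mx_normrE.
exact: (le_bigmax _ (fun ij : 'I_p * 'I_q => `|M ij.1 ij.2|) (i, j)).
Qed.

Lemma mxnorm_le (p q : nat) (M : 'M[R]_(p, q)) (c : R) :
  0 <= c -> (forall i j, `|M i j| <= c) -> `|M| <= c.
Proof.
move=> c0 Hc; change (mx_norm M <= c); rewrite mx_normrE.
by apply: bigmax_le => // -[i j] _; exact: Hc.
Qed.

Lemma mxnorm_le_enorm (m : nat) (u : 'cV[R]_m) : `|u| <= enorm u.
Proof.
by apply: mxnorm_le; [exact: enorm_ge0| move=> i j; rewrite ord1; exact: coord_le_enorm].
Qed.

Lemma enorm_le_mxnorm (m : nat) (u : 'cV[R]_m) : enorm u <= m%:R * `|u|.
Proof.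
have h0 : 0 <= m%:R * `|u| by rewrite mulr_ge0.
rewrite /enorm -(ger0_norm h0) -sqrtr_sqr ler_sqrt ?sqr_ge0 //.
apply: (@le_trans _ _ (\sum_(i < m) `|u| ^+ 2)).
  apply: ler_sum => i _; rewrite -expr2 -real_normK ?num_real //.
  by rewrite lerXn2r ?nnegrE ?normr_ge0 // (le_trans (coord_le_mxnorm u i 0)).
rewrite sumr_const card_ord exprMn [X in _ <= X]mulrC -[X in X <= _]mulr_natr.
apply: ler_wpM2l; first exact: sqr_ge0.
by rewrite -natrX ler_nat; case: m {u h0} => // m; rewrite expnS leq_pmulr.
Qed.

Lemma enorm_eq0 (m : nat) (u : 'cV[R]_m) : enorm u = 0 -> u = 0.
Proof.
move=> h; apply/eqP; rewrite -normr_eq0 eq_le normr_ge0 andbT.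
by rewrite -h mxnorm_le_enorm.
Qed.

Lemma enorm_gt0 (m : nat) (u : 'cV[R]_m) : u != 0 -> 0 < enorm u.
Proof.
move=> u0; rewrite lt_def enorm_ge0 andbT; apply/eqP => /enorm_eq0 h.
by rewrite h eqxx in u0.
Qed.

Lemma dotvv_eq0 (m : nat) (u : 'cV[R]_m) : dotv u u = 0 -> u = 0.
Proof. by move=> h; apply: enorm_eq0; rewrite /enorm h sqrtr0. Qed.

Lemma dotv_bound (m : nat) (u v : 'cV[R]_m) : `|dotv u v| <= m%:R * (`|u| * `|v|).
Proof.
rewrite /dotv (le_trans (ler_norm_sum _ _ _)) //.
apply: (@le_trans _ _ (\sum_(i < m) (`|u| * `|v|))); last by rewrite sumr_const card_ord mulr_natl.
apply: ler_sum => i _; rewrite normrM ler_pM ?normr_ge0 //; exact: coord_le_mxnorm.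
Qed.

Lemma mulmx_norm (p q r : nat) (A : 'M[R]_(p, q)) (B : 'M[R]_(q, r)) :
  `|A *m B| <= q%:R * (`|A| * `|B|).
Proof.
apply: mxnorm_le => [|i j]; first by rewrite !mulr_ge0.
rewrite mxE (le_trans (ler_norm_sum _ _ _)) //.
apply: (@le_trans _ _ (\sum_(k < q) (`|A| * `|B|))); last by rewrite sumr_const card_ord mulr_natl.
apply: ler_sum => k _; rewrite normrM ler_pM ?normr_ge0 //; exact: coord_le_mxnorm.
Qed.

Lemma matrix_ext_mul (p q : nat) (A B : 'M[R]_(p, q)) :
  (forall z : 'cV[R]_q, A *m z = B *m z) -> A = B.
Proof.
move=> h; apply/matrixP => i j.
have := congr1 (fun M : 'cV[R]_p => M i 0) (h (delta_mx j 0)).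
rewrite !mxE (bigD1 j) //= (bigD1 (P := predT) j) //= !mxE !eqxx !mulr1 !big1 ?addr0 //.
  by move=> k /negbTE kj; rewrite mxE kj mulr0.
by move=> k /negbTE kj; rewrite mxE kj mulr0.
Qed.

End VecBasics.

Section CvgMx.
Variable R : realType.

Lemma cvg_mxP {T : Type} (F : set_system T) {FF : Filter F} (p q : nat)
  (u : T -> 'M[R]_(p, q)) (M : 'M[R]_(p, q)) :
  u @ F --> M <-> forall i j, (fun t => u t i j) @ F --> M i j.
Proof.
split.
  move=> hu i j; exact: (cvg_comp _ _ hu (@coord_continuous R p q i j M)).
move=> h; apply/cvgrPdist_le => eps eps0.
have : \forall t \near F, forall ij : 'I_p * 'I_q, `|M ij.1 ij.2 - u t ij.1 ij.2| <= eps.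
  apply: filter_forall => -[i j] /=.
  by move/cvgrPdist_le: (h i j) => /(_ eps eps0).
apply: filterS => t ht; apply: mxnorm_le; first exact: ltW.
by move=> i j; rewrite !mxE; exact: (ht (i, j)).
Qed.

End CvgMx.

Section CvgOps.
Variable R : realType.
Context {T : Type} {F : set_system T} {FF : Filter F}.

Lemma cvg_sumR (I : finType) (f : I -> T -> R) (a : I -> R) :
  (forall i, f i @ F --> a i) -> (fun t => \sum_i f i t) @ F --> \sum_i a i.
Proof.
move=> h; apply: cvg_big => //; first exact: pseudometric_normed_Zmodule.add_continuous.
Qed.

Lemma cvg_prodR (I : finType) (f : I -> T -> R) (a : I -> R) :
  (forall i, f i @ F --> a i) -> (fun t => \prod_i f i t) @ F --> \prod_i a i.
Proof.
move=> h; apply: cvg_big => //; first exact: mul_continuous.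
Qed.

Lemma cvg_mulmx (p q r : nat) (A : T -> 'M[R]_(p, q)) (B : T -> 'M[R]_(q, r)) (A0 : 'M[R]_(p, q)) (B0 : 'M[R]_(q, r)) :
  A @ F --> A0 -> B @ F --> B0 -> (fun t => A t *m B t) @ F --> A0 *m B0.
Proof.
move=> /cvg_mxP hA /cvg_mxP hB; apply/cvg_mxP => i j; rewrite mxE.
under eq_cvg do rewrite mxE.
by apply: cvg_sumR => k; apply: cvgM; [exact: hA|exact: hB].
Qed.

Lemma cvg_trmx (p q : nat) (A : T -> 'M[R]_(p, q)) (A0 : 'M[R]_(p, q)) :
  A @ F --> A0 -> (fun t => (A t)^T) @ F --> A0^T.
Proof.
move=> /cvg_mxP hA; apply/cvg_mxP => i j; rewrite mxE.
by under eq_cvg do rewrite mxE; exact: hA.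
Qed.

Lemma cvg_col_mx (p1 p2 q : nat) (A : T -> 'M[R]_(p1, q)) (B : T -> 'M[R]_(p2, q)) (A0 : 'M[R]_(p1, q)) (B0 : 'M[R]_(p2, q)) :
  A @ F --> A0 -> B @ F --> B0 -> (fun t => col_mx (A t) (B t)) @ F --> col_mx A0 B0.
Proof.
move=> /cvg_mxP hA /cvg_mxP hB; apply/cvg_mxP => i j; rewrite -(splitK i).
case: (fintype.split i) => k /=.
  by rewrite col_mxEu; under eq_cvg do rewrite col_mxEu; exact: hA.
by rewrite col_mxEd; under eq_cvg do rewrite col_mxEd; exact: hB.
Qed.

Lemma cvg_row_mx (p q1 q2 : nat) (A : T -> 'M[R]_(p, q1)) (B : T -> 'M[R]_(p, q2)) (A0 : 'M[R]_(p, q1)) (B0 : 'M[R]_(p, q2)) :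
  A @ F --> A0 -> B @ F --> B0 -> (fun t => row_mx (A t) (B t)) @ F --> row_mx A0 B0.
Proof.
move=> /cvg_mxP hA /cvg_mxP hB; apply/cvg_mxP => i j; rewrite -(splitK j).
case: (fintype.split j) => k /=.
  by rewrite row_mxEl; under eq_cvg do rewrite row_mxEl; exact: hA.
by rewrite row_mxEr; under eq_cvg do rewrite row_mxEr; exact: hB.
Qed.

Lemma cvg_block_mx (p1 p2 q1 q2 : nat) (A : T -> 'M[R]_(p1, q1)) (B : T -> 'M[R]_(p1, q2))
  (C : T -> 'M[R]_(p2, q1)) (D : T -> 'M[R]_(p2, q2)) (A0 : 'M[R]_(p1, q1)) (B0 : 'M[R]_(p1, q2)) (C0 : 'M[R]_(p2, q1)) (D0 : 'M[R]_(p2, q2)) :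
  A @ F --> A0 -> B @ F --> B0 -> C @ F --> C0 -> D @ F --> D0 ->
  (fun t => block_mx (A t) (B t) (C t) (D t)) @ F --> block_mx A0 B0 C0 D0.
Proof.
by move=> hA hB hC hD; apply: cvg_col_mx; apply: cvg_row_mx.
Qed.

Lemma cvg_usubmx (p1 p2 q : nat) (A : T -> 'M[R]_(p1 + p2, q)) (A0 : 'M[R]_(p1 + p2, q)) :
  A @ F --> A0 -> (fun t => usubmx (A t)) @ F --> usubmx A0.
Proof.
move=> /cvg_mxP hA; apply/cvg_mxP => i j; rewrite mxE.
by under eq_cvg do rewrite mxE; exact: hA.
Qed.

Lemma cvg_dsubmx (p1 p2 q : nat) (A : T -> 'M[R]_(p1 + p2, q)) (A0 : 'M[R]_(p1 + p2, q)) :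
  A @ F --> A0 -> (fun t => dsubmx (A t)) @ F --> dsubmx A0.
Proof.
move=> /cvg_mxP hA; apply/cvg_mxP => i j; rewrite mxE.
by under eq_cvg do rewrite mxE; exact: hA.
Qed.

Lemma cvg_dotv (m : nat) (u v : T -> 'cV[R]_m) u0 v0 :
  u @ F --> u0 -> v @ F --> v0 -> (fun t => dotv (u t) (v t)) @ F --> dotv u0 v0.
Proof.
move=> /cvg_mxP hu /cvg_mxP hv; apply: cvg_sumR => i.
by apply: cvgM; [exact: hu|exact: hv].
Qed.

Lemma cvg_det (m : nat) (A : T -> 'M[R]_m) (A0 : 'M[R]_m) :
  A @ F --> A0 -> (fun t => \det (A t)) @ F --> \det A0.
Proof.
move=> /cvg_mxP hA; apply: cvg_sumR => s; apply: cvgM; first exact: cvg_cst.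
by apply: cvg_prodR => i; exact: hA.
Qed.

Lemma cvg_adj (m : nat) (A : T -> 'M[R]_m) (A0 : 'M[R]_m) :
  A @ F --> A0 -> (fun t => \adj (A t)) @ F --> \adj A0.
Proof.
move=> hA; apply/cvg_mxP => i j; rewrite mxE /cofactor.
under eq_cvg do rewrite mxE /cofactor.
apply: cvgM; first exact: cvg_cst.
apply: cvg_det; move/cvg_mxP: hA => hA; apply/cvg_mxP => k l; rewrite !mxE.
by under eq_cvg do rewrite !mxE; exact: hA.
Qed.

Lemma cvg_invmx (m : nat) (A : T -> 'M[R]_m) (A0 : 'M[R]_m) :
  A0 \in unitmx -> A @ F --> A0 -> (fun t => invmx (A t)) @ F --> invmx A0.
Proof.
move=> uA hA.
have hd := cvg_det hA.
have d0 : \det A0 != 0 by rewrite -unitfE -unitmxE.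
have ev : F (fun t => \det (A t) != 0) := cvgr_neq0 _ hd d0.
have e : F (fun t => (\det (A t))^-1 *: \adj (A t) = invmx (A t)).
  have sub : (fun t => \det (A t) != 0) `<=` (fun t => (\det (A t))^-1 *: \adj (A t) = invmx (A t)).
    by move=> t dt; rewrite /invmx unitmxE unitfE dt.
  exact (@filterS _ _ FF _ _ sub (ev FF)).
apply: cvg_trans (@near_eq_cvg _ _ F FF _ _ e) _.
rewrite /invmx uA; apply: cvgZ; last exact: cvg_adj.
by rewrite unitmxE unitfE in uA; apply: cvgV.
Qed.

End CvgOps.

Section Proj.
Variable R : realType.

Definition isproj (m : nat) (P : 'M[R]_m) (L : set 'cV[R]_m) : Prop :=
  [/\ P^T = P, P *m P = P & [set P *m z | z in [set: 'cV[R]_m]] = L].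

Lemma inj_unitmx (k : nat) (M : 'M[R]_k) :
  (forall z : 'cV[R]_k, M *m z = 0 -> z = 0) -> M \in unitmx.
Proof.
move=> h; rewrite -unitmx_tr -row_free_unit -kermx_eq0; apply/eqP/row_matrixP => i.
rewrite row0; set u := row i (kermx M^T).
have hu : u *m M^T = 0 by apply/sub_kermxP; exact: row_sub.
apply: trmx_inj; rewrite trmx0; apply: h.
by rewrite -[M in M *m _]trmxK -trmx_mul hu trmx0.
Qed.

Lemma rank_inj (m k : nat) (B : 'M[R]_(m, k)) :
  \rank B = k -> forall z : 'cV[R]_k, B *m z = 0 -> z = 0.
Proof.
move=> rB z Bz.
have rf : row_free B^T by rewrite /row_free mxrank_tr rB.
apply: trmx_inj; rewrite trmx0; apply: (row_free_inj rf).
by rewrite /= -trmx_mul Bz trmx0 mul0mx.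
Qed.

Lemma proj_unique (m : nat) (P Q : 'M[R]_m) (L : set 'cV[R]_m) :
  isproj P L -> isproj Q L -> P = Q.
Proof.
move=> [sP iP rP] [sQ iQ rQ].
have PQ : P *m Q = Q.
  apply: matrix_ext_mul => z; rewrite -mulmxA.
  have : L (Q *m z) by rewrite -rQ; exists z.
  by rewrite -rP => -[y _ <-]; rewrite mulmxA iP.
have QP : Q *m P = P.
  apply: matrix_ext_mul => z; rewrite -mulmxA.
  have : L (P *m z) by rewrite -rP; exists z.
  by rewrite -rQ => -[y _ <-]; rewrite mulmxA iQ.
by rewrite -sP -QP trmx_mul sP sQ PQ.
Qed.

Lemma proj_mxP (m : nat) (P : 'M[R]_m) (L : set 'cV[R]_m) :
  isproj P L -> Defs.proj_mx L = P.
Proof.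
move=> hP; have ex : exists P', isproj P' L by exists P.
have := xgetPex 0 ex; rewrite /Defs.proj_mx => hx.
exact: (proj_unique hx hP).
Qed.

Lemma Znn_proj (n : nat) (L : set 'cV[R]_(n + n)) :
  is_Znn L -> isproj (Defs.proj_mx L) L.
Proof.
move=> [B [rB ->]].
set X := invmx (B^T *m B).
have inj := rank_inj rB.
have uBB : B^T *m B \in unitmx.
  apply: inj_unitmx => z hz; apply: inj.
  apply: dotvv_eq0; rewrite dotv_mulmx mulmxA hz dotv0r //.
have XB : X *m (B^T *m B) = 1%:M by rewrite mulVmx.
suff hP : isproj (B *m X *m B^T) [set B *m c | c in [set: 'cV[R]_n]].
  by rewrite (proj_mxP hP).
split.
- by rewrite !trmx_mul trmxK /X trmx_inv trmx_mul trmxK mulmxA.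
- by rewrite -!mulmxA [B^T *m (B *m _)]mulmxA [X *m (_ *m _)]mulmxA XB mul1mx.
- apply/seteqP; split => _ [z _ <-].
    by exists (X *m B^T *m z) => //; rewrite !mulmxA.
  exists (B *m z) => //.
  by rewrite -!mulmxA [B^T *m (B *m z)]mulmxA [X *m (_ *m z)]mulmxA XB mul1mx.
Qed.

Lemma Znn_mul (n : nat) (M : 'M[R]_(n + n)) (L : set 'cV[R]_(n + n)) :
  M \in unitmx -> is_Znn L -> is_Znn (mulmx M @` L).
Proof.
move=> uM [B [rB ->]]; exists (M *m B); split.
  rewrite -mxrank_tr trmx_mul mxrankMfree ?mxrank_tr //.
  by rewrite row_free_unit unitmx_tr.
apply/seteqP; split.
  by move=> _ [_ [c _ <-] <-]; exists c => //; rewrite mulmxA.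
by move=> _ [c _ <-]; exists (B *m c); [exists c|rewrite mulmxA].
Qed.

(* projection onto M T, given projection P onto T *)
Definition Dmx (m : nat) (M P : 'M[R]_m) : 'M[R]_m :=
  (M *m P)^T *m (M *m P) + (1%:M - P).
Definition Fmx (m : nat) (M P : 'M[R]_m) : 'M[R]_m :=
  (M *m P) *m invmx (Dmx M P) *m (M *m P)^T.

Lemma Dmx_unit (m : nat) (M P : 'M[R]_m) :
  P^T = P -> P *m P = P -> M \in unitmx -> Dmx M P \in unitmx.
Proof.
move=> sP iP uM; apply: inj_unitmx => z hz.
set C := M *m P.
have sQ : (1%:M - P)^T = 1%:M - P by rewrite linearB /= trmx1 sP.
have iQ : (1%:M - P) *m (1%:M - P) = 1%:M - P.
  by rewrite mulmxBl mul1mx mulmxBr mulmx1 iP subrr subr0.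
have h0 : dotv (C *m z) (C *m z) + dotv ((1%:M - P) *m z) ((1%:M - P) *m z) = 0.
  rewrite dotv_mulmx [X in _ + X]dotv_mulmx sQ [(1%:M - P) *m (_ *m z)]mulmxA iQ.
  by rewrite -dotvDr mulmxA -mulmxDl -/(Dmx M P) hz dotv0r.
have [h1 h2] : dotv (C *m z) (C *m z) = 0 /\ dotv ((1%:M - P) *m z) ((1%:M - P) *m z) = 0.
  move: h0 (dotvv_ge0 (C *m z)) (dotvv_ge0 ((1%:M - P) *m z)).
  by move=> h0 a b; split; apply/eqP; rewrite eq_le; [rewrite a andbT | rewrite b andbT];
    rewrite -h0; [rewrite lerDl | rewrite lerDr].
have Pz : P *m z = 0.
  have h3 : M *m (P *m z) = 0 by rewrite mulmxA; exact: dotvv_eq0 h1.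
  have := congr1 (mulmx (invmx M)) h3.
  by rewrite mulmx0 !mulmxA mulVmx // mul1mx.
have := dotvv_eq0 h2; rewrite mulmxBl mul1mx Pz subr0 //.
Qed.

Lemma Fmx_proj (m : nat) (M P : 'M[R]_m) (T : set 'cV[R]_m) :
  isproj P T -> M \in unitmx -> isproj (Fmx M P) (mulmx M @` T).
Proof.
move=> [sP iP rP] uM.
set C := M *m P; set D := Dmx M P; set X := invmx D.
have uD : D \in unitmx by exact: Dmx_unit.
have XD : X *m D = 1%:M by rewrite mulVmx.
have DX : D *m X = 1%:M by rewrite mulmxV.
have CP : C *m P = C by rewrite /C -mulmxA iP.
have PCt : P *m C^T = C^T by rewrite /C trmx_mul sP mulmxA iP.
have sD : D^T = D by rewrite /D /Dmx linearD /= trmx_mul trmxK linearB /= trmx1 sP.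
have DP : D *m P = C^T *m C.
  by rewrite /D /Dmx mulmxDl mulmxBl mul1mx iP subrr addr0 -mulmxA CP.
have PD : P *m D = C^T *m C.
  by rewrite /D /Dmx mulmxDr mulmxBr mulmx1 iP subrr addr0 mulmxA PCt.
have XP : X *m P = P *m X.
  have := congr1 (fun Y => X *m Y *m X) (etrans DP (esym PD)).
  by rewrite /= mulmxA XD mul1mx -!mulmxA DX mulmx1.
have C1P : C *m (1%:M - P) = 0 by rewrite mulmxBr mulmx1 CP subrr.
have CX1P : C *m X *m (1%:M - P) = 0.
  by rewrite -mulmxA mulmxBr mulmx1 XP mulmxBr mulmxA CP subrr.
have CtC : C^T *m C = D - (1%:M - P) by rewrite /D /Dmx addrK.
have QC : Fmx M P *m C = C.
  by rewrite /Fmx -/C -/D -/X -mulmxA CtC mulmxBr CX1P subr0 -mulmxA XD mulmx1.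
split.
- rewrite /Fmx -/C -/D -/X [in LHS]trmx_mul trmxK [in LHS]trmx_mul.
  by rewrite /X trmx_inv sD mulmxA.
- rewrite /Fmx -/C -/D -/X !mulmxA -[_ *m M *m P]mulmxA -/C -[C *m X *m C^T *m C]mulmxA CtC mulmxBr CX1P subr0.
  by rewrite -[C *m X *m D]mulmxA XD mulmx1.
- apply/seteqP; split.
    move=> _ [z _ <-]; rewrite -rP.
    exists (P *m (X *m C^T *m z)); first by exists (X *m C^T *m z).
    by rewrite /Fmx -/C -/D -/X !mulmxA.
  move=> _ [t Tt <-]; move: Tt; rewrite -rP => -[y _ <-]; exists (C *m y) => //.
  by rewrite mulmxA QC /C mulmxA.
Qed.

End Proj.

Section OpNorm.
Variable R : realType.

Definition opc (m : nat) (X : 'M[R]_m) : R := m%:R * (m%:R * `|X|).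

Lemma opnorm_elem_ub (m : nat) (X : 'M[R]_m) (z : 'cV[R]_m) :
  enorm z <= 1 -> enorm (X *m z) <= opc X.
Proof.
move=> hz; rewrite /opc (le_trans (enorm_le_mxnorm _)) // ler_wpM2l //.
rewrite (le_trans (mulmx_norm _ _)) // ler_wpM2l // -[X in _ <= X]mulr1 ler_wpM2l //.
exact: le_trans (mxnorm_le_enorm _) hz.
Qed.

Lemma opnorm_set_ne (m : nat) (X : 'M[R]_m) :
  [set enorm (X *m z) | z in [set z : 'cV[R]_m | enorm z <= 1]] !=set0.
Proof.
exists (enorm (X *m 0)); exists 0 => //=.
by rewrite /enorm dotv0r sqrtr0.
Qed.

Lemma opnorm_hasub (m : nat) (X : 'M[R]_m) :
  has_ubound [set enorm (X *m z) | z in [set z : 'cV[R]_m | enorm z <= 1]].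
Proof. by exists (opc X) => _ [z hz <-]; exact: opnorm_elem_ub. Qed.

Lemma opnorm_le (m : nat) (X : 'M[R]_m) : opnorm X <= opc X.
Proof. by apply: ge_sup; [exact: opnorm_set_ne| move=> _ [z hz <-]; exact: opnorm_elem_ub]. Qed.

Lemma opnorm_ge_elem (m : nat) (X : 'M[R]_m) (z : 'cV[R]_m) :
  enorm z <= 1 -> enorm (X *m z) <= opnorm X.
Proof. by move=> hz; apply: (ub_le_sup (opnorm_hasub X)); exists z. Qed.

Lemma opnorm_ge0 (m : nat) (X : 'M[R]_m) : 0 <= opnorm X.
Proof.
apply: le_trans (opnorm_ge_elem X (z := 0) _); first exact: enorm_ge0.
by rewrite /enorm dotv0r sqrtr0.
Qed.

Lemma enorm_delta (m : nat) (j : 'I_m) : enorm (delta_mx j 0 : 'cV[R]_m) = 1.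
Proof.
rewrite /enorm /dotv (bigD1 j) //= !mxE !eqxx mulr1 big1 ?addr0 ?sqrtr1 //.
by move=> k /negbTE kj; rewrite mxE kj mulr0.
Qed.

Lemma mulmx_delta (m : nat) (X : 'M[R]_m) i j : (X *m (delta_mx j 0 : 'cV[R]_m)) i 0 = X i j.
Proof.
rewrite mxE (bigD1 j) //= !mxE !eqxx mulr1 big1 ?addr0 //.
by move=> k /negbTE kj; rewrite mxE kj mulr0.
Qed.

Lemma mxnorm_le_opnorm (m : nat) (X : 'M[R]_m) : `|X| <= opnorm X.
Proof.
apply: mxnorm_le; first exact: opnorm_ge0.
move=> i j; rewrite -mulmx_delta; apply: le_trans (coord_le_enorm _ _) _.
by apply: opnorm_ge_elem; rewrite enorm_delta.
Qed.

Lemma opnorm_cvg0P (m : nat) (X : nat -> 'M[R]_m) (X0 : 'M[R]_m) :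
  (fun k => opnorm (X0 - X k)) @ \oo --> (0 : R) <-> X @ \oo --> X0.
Proof.
split.
  move=> /cvgrPdist_le h; apply/cvgrPdist_le => e e0.
  apply: filterS (h e e0) => k; rewrite sub0r normrN ger0_norm ?opnorm_ge0 //.
  exact: le_trans (mxnorm_le_opnorm _).
move=> /cvgrPdist_le h; apply/cvgrPdist_le => e e0.
set K : R := m%:R * m%:R.
have K0 : 0 <= K by rewrite mulr_ge0.
have e1 : 0 < e / (K + 1) by rewrite divr_gt0 // ltr_wpDl.
apply: filterS (h _ e1) => k hk.
rewrite sub0r normrN ger0_norm ?opnorm_ge0 //; apply: le_trans (opnorm_le _) _.
rewrite /opc mulrA -/K.
apply: (@le_trans _ _ ((K + 1) * `|X0 - X k|)).
  by rewrite ler_wpM2r // lerDl.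
by rewrite mulrC -ler_pdivlMr // ltr_wpDl.
Qed.

Lemma dZ_cvg0P (n : nat) (L : set 'cV[R]_(n + n)) (Ts : nat -> set 'cV[R]_(n + n)) :
  (fun k => dZ L (Ts k)) @ \oo --> (0 : R) <->
  (fun k => Defs.proj_mx (Ts k)) @ \oo --> Defs.proj_mx L.
Proof. exact: opnorm_cvg0P. Qed.

Lemma cvg_Dmx (m : nat) (Ms Ps : nat -> 'M[R]_m) (M P : 'M[R]_m) :
  Ms @ \oo --> M -> Ps @ \oo --> P -> (fun k => Dmx (Ms k) (Ps k)) @ \oo --> Dmx M P.
Proof.
move=> hM hP; rewrite /Dmx.
have hC : (fun k => Ms k *m Ps k) @ \oo --> M *m P by exact: cvg_mulmx hM hP.
have h1 : (fun k => (Ms k *m Ps k)^T *m (Ms k *m Ps k)) @ \oo --> (M *m P)^T *m (M *m P).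
  by apply: cvg_mulmx => //; exact: cvg_trmx.
have h2 : (fun k => 1%:M - Ps k) @ \oo --> (1%:M - P : 'M[R]_m).
  by apply: cvgB => //; exact: cvg_cst.
exact: cvgD h1 h2.
Qed.

Lemma dZ_mul_cvg (n : nat) (L : set 'cV[R]_(n + n)) (Ts : nat -> set 'cV[R]_(n + n))
  (Ms : nat -> 'M[R]_(n + n)) (M : 'M[R]_(n + n)) :
  is_Znn L -> (forall k, is_Znn (Ts k)) -> (forall k, Ms k \in unitmx) -> M \in unitmx ->
  Ms @ \oo --> M ->
  (fun k => dZ L (Ts k)) @ \oo --> (0 : R) ->
  (fun k => dZ (mulmx M @` L) (mulmx (Ms k) @` Ts k)) @ \oo --> (0 : R).
Proof.
move=> ZL ZT uMs uM hM /dZ_cvg0P hP; apply/dZ_cvg0P.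
have pL := Znn_proj ZL; have pT := fun k => Znn_proj (ZT k).
rewrite (proj_mxP (Fmx_proj pL uM)).
under eq_cvg do rewrite (proj_mxP (Fmx_proj (pT _) (uMs _))).
have [sP iP _] := pL.
rewrite /Fmx; apply: cvg_mulmx; first apply: cvg_mulmx.
- exact: cvg_mulmx hM hP.
- by apply: cvg_invmx; [exact: Dmx_unit | exact: cvg_Dmx].
- exact: cvg_trmx (cvg_mulmx hM hP).
Qed.

End OpNorm.

Lemma diff_eps (R : realType) (V W : normedModType R) (f : V -> W) (x : V) (L : V -> W) :
  differentiable f x -> ('d f x : V -> W) =1 L ->
  forall e : R, 0 < e -> exists2 d : R, 0 < d &
    forall y, `|y - x| < d -> `|f y - f x - L (y - x)| <= e * `|y - x|.
Proof.
move=> df dL e e0.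
have := diff_locally df; move/eqaddoP => /(_ e e0).
move=> /nbhs_ballP [d d0 hd]; exists d => // y hy.
have : ball (0 : V) d (y - x) by rewrite -ball_normE /ball_ /= sub0r normrN.
by move/hd => /=; rewrite !fctE /= subrK -dL opprD addrA.
Qed.

Lemma cvg_EFin_seq (R : realType) (u : nat -> R) (a : R) :
  u @ \oo --> a -> (fun k => (u k)%:E) @ \oo --> a%:E.
Proof. by move=> h; apply: cvg_EFin => //; exact: nearW. Qed.

Section SumRule.
Variables (R : realType) (n : nat).
Variables (c : 'cV[R]_n -> R) (Gc : 'cV[R]_n -> 'cV[R]_n) (Hc : 'cV[R]_n -> 'M[R]_n).
Hypothesis hc : C2_with c Gc Hc.

Lemma c_diff x : differentiable c x. Proof. by case: hc => h _ _; case: (h x). Qed.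
Lemma c_d x : ('d c x : 'cV[R]_n -> R) =1 dotv (Gc x). Proof. by case: hc => h _ _; case: (h x). Qed.
Lemma G_diff x : differentiable Gc x. Proof. by case: hc => _ h _; case: (h x). Qed.
Lemma G_d x : ('d Gc x : 'cV[R]_n -> 'cV[R]_n) =1 (fun v => Hc x *m v).
Proof. by case: hc => _ h _; case: (h x). Qed.
Lemma H_cont : continuous Hc. Proof. by case: hc. Qed.
Lemma c_cont : continuous c. Proof. by move=> x; apply: differentiable_continuous; exact: c_diff. Qed.
Lemma G_cont : continuous Gc. Proof. by move=> x; apply: differentiable_continuous; exact: G_diff. Qed.

Lemma c_eps x (e : R) : 0 < e -> exists2 d : R, 0 < d &
  forall y, enorm (y - x) < d -> `|c y - c x - dotv (Gc x) (y - x)| <= e * enorm (y - x).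
Proof.
move=> e0; have [d d0 hd] := diff_eps (c_diff x) (c_d x) e0.
exists d => // y hy.
have h1 := mxnorm_le_enorm (y - x).
apply: le_trans (hd y (le_lt_trans h1 hy)) _.
by rewrite ler_wpM2l // ltW.
Qed.

Variable phi : 'cV[R]_n -> \bar R.
Let psi := fun y => (phi y + (c y)%:E)%E.

Lemma reg_sum x xs : reg_subdiff phi x xs -> reg_subdiff psi x (xs + Gc x).
Proof.
move=> [fx hx]; split; first by rewrite /psi fin_numD fx.
move=> e e0.
have e20 : 0 < e / 2 by rewrite divr_gt0.
have [d1 d10 h1] := hx _ e20.
have [d2 d20 h2] := c_eps x e20.
exists (Num.min d1 d2); first by rewrite lt_min d10 d20.
move=> y /andP[yp]; rewrite lt_min => /andP[yd1 yd2].
have := h1 y; rewrite yp yd1 => /(_ isT) hphi.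
have := h2 y yd2; rewrite ler_norml => /andP[hc1 _].
rewrite /psi; move: fx hphi.
case: (phi x) => [r| |] //= _; case: (phi y) => [r'| |] //=.
  rewrite -!EFinD !lee_fin dotvDl => hphi.
  set E := enorm (y - x) in hc1 hphi *.
  set a := dotv xs (y - x) in hphi *; set b := dotv (Gc x) (y - x) in hc1 *.
  have -> : e * E = e / 2 * E + e / 2 * E by rewrite -mulrDl -splitr.
  by lra.
by move=> _; rewrite -EFinD; exact: leey.
Qed.

Lemma cvg_psi (xk : nat -> 'cV[R]_n) (x : 'cV[R]_n) :
  xk @ \oo --> x -> (fun k => phi (xk k)) @ \oo --> phi x ->
  (fun k => psi (xk k)) @ \oo --> psi x.
Proof.
move=> hx hp; apply: cvgeD => //; first exact: fin_num_adde_defl.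
apply: cvg_EFin_seq; exact: (continuous_cvg _ (@c_cont x) hx).
Qed.

Lemma lim_sum x xs : lim_subdiff phi x xs -> lim_subdiff psi x (xs + Gc x).
Proof.
move=> [fx [xk [xsk [hx hp hxs hr]]]]; split; first by rewrite /psi fin_numD fx.
exists xk, (fun k => xsk k + Gc (xk k)); split => //.
- exact: cvg_psi.
- by apply: cvgD => //; exact: (continuous_cvg _ (@G_cont x) hx).
- by move=> k; exact: reg_sum.
Qed.

Definition Phi (z : 'cV[R]_(n + n)) : 'cV[R]_(n + n) :=
  col_mx (usubmx z) (dsubmx z + Gc (usubmx z)).

Lemma Phi_u z : usubmx (Phi z) = usubmx z. Proof. by rewrite col_mxKu. Qed.
Lemma Phi_d z : dsubmx (Phi z) = dsubmx z + Gc (usubmx z). Proof. by rewrite col_mxKd. Qed.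

Lemma gph_sum z : gph_sd phi z -> gph_sd psi (Phi z).
Proof. by rewrite /gph_sd /= Phi_u Phi_d; exact: lim_sum. Qed.

Lemma Phi_cvg (zk : nat -> 'cV[R]_(n + n)) (z : 'cV[R]_(n + n)) : zk @ \oo --> z -> (fun k => Phi (zk k)) @ \oo --> Phi z.
Proof.
move=> hz; apply: cvg_col_mx; first exact: cvg_usubmx.
apply: cvgD; first exact: cvg_dsubmx.
exact: (continuous_cvg _ (@G_cont _) (cvg_usubmx hz)).
Qed.

Lemma att_sum zk z : att_conv phi zk z -> att_conv psi (fun k => Phi (zk k)) (Phi z).
Proof.
move=> [hg hz hp]; split.
- by move=> k; exact: gph_sum.
- exact: Phi_cvg.
- rewrite Phi_u; under eq_cvg do rewrite Phi_u.
  by apply: cvg_psi => //; exact: cvg_usubmx.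
Qed.

Definition Amx (H : 'cV[R]_n -> 'M[R]_n) (x : 'cV[R]_n) : 'M[R]_(n + n) :=
  block_mx 1%:M 0 (H x) 1%:M.

Lemma Amx_mul (H : 'cV[R]_n -> 'M[R]_n) x (w : 'cV[R]_(n + n)) :
  Amx H x *m w = col_mx (usubmx w) (dsubmx w + H x *m usubmx w).
Proof.
by rewrite -[w in LHS]vsubmxK /Amx mul_block_col !mul1mx mul0mx addr0 addrC.
Qed.

Lemma dir_deriv_seq (tk : nat -> R) (xk : nat -> 'cV[R]_n) (x v : 'cV[R]_n) :
  (forall k, 0 < tk k) -> xk @ \oo --> x ->
  (fun k => (tk k)^-1 *: (xk k - x)) @ \oo --> v ->
  (fun k => (tk k)^-1 *: (Gc (xk k) - Gc x)) @ \oo --> Hc x *m v.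
Proof.
move=> tp hx hv.
have e1 : forall k, (tk k)^-1 *: (Gc (xk k) - Gc x) =
   (tk k)^-1 *: (Gc (xk k) - Gc x - Hc x *m (xk k - x)) + Hc x *m ((tk k)^-1 *: (xk k - x)).
  by move=> k; rewrite -scalemxAr -scalerDr subrK.
under eq_cvg do rewrite e1.
have h2 : (fun k => Hc x *m ((tk k)^-1 *: (xk k - x))) @ \oo --> Hc x *m v.
  by apply: cvg_mulmx => //; exact: cvg_cst.
rewrite -[Hc x *m v]add0r; apply: cvgD h2.
apply/cvgrPdist_le => eps eps0.
set B := `|v| + 1.
have B0 : 0 < B by rewrite ltr_wpDl.
have ee : 0 < eps / 2 / B by rewrite !divr_gt0.
have [d d0 hd] := diff_eps (G_diff x) (G_d x) ee.
have hb : \forall k \near \oo, `|(tk k)^-1 *: (xk k - x)| <= B.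
  move/cvgrPdist_le : hv => /(_ 1 ltr01); apply: filterS => k hk.
  set q := (tk k)^-1 *: (xk k - x) in hk *.
  have e : q = v + (q - v) by rewrite addrC subrK.
  rewrite e (le_trans (ler_normD _ _)) // /B lerD2l distrC //.
have hxd : \forall k \near \oo, `|xk k - x| < d.
  move/cvgrPdist_lt : hx => /(_ d d0); apply: filterS => k.
  by rewrite -normrN opprB.
near=> k.
have hk1 : `|xk k - x| < d by near: k; exact: hxd.
have hk2 : `|(tk k)^-1 *: (xk k - x)| <= B by near: k; exact: hb.
rewrite sub0r normrN normrZ ger0_norm ?invr_ge0 ?ltW //.
have h := hd (xk k) hk1.
have tk0 : 0 <= (tk k)^-1 by rewrite invr_ge0 ltW.
rewrite normrZ ger0_norm // in hk2.
apply: le_lt_trans (ler_wpM2l tk0 h) _; rewrite mulrCA.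
apply: le_lt_trans (ler_wpM2l (ltW ee) hk2) _.
by rewrite divfK ?gt_eqF // ltr_pdivrMr // ltr_pMr // ltr1n.
Unshelve. all: by end_near.
Qed.

Lemma tangent_sum z w : att_tangent phi z w ->
  att_tangent psi (Phi z) (Amx Hc (usubmx z) *m w).
Proof.
move=> [tk [zk [tp t0 hatt hw]]].
exists tk, (fun k => Phi (zk k)); split => //; first exact: att_sum.
have [_ hz _] := hatt.
have e1 : forall k, (tk k)^-1 *: (Phi (zk k) - Phi z) =
   col_mx (usubmx ((tk k)^-1 *: (zk k - z)))
          (dsubmx ((tk k)^-1 *: (zk k - z)) +
             (tk k)^-1 *: (Gc (usubmx (zk k)) - Gc (usubmx z))).
  move=> k; rewrite /Phi opp_col_mx add_col_mx scale_col_mx.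
  by congr col_mx; apply/matrixP => i j; rewrite !mxE; ring.
under eq_cvg do rewrite e1.
rewrite Amx_mul; apply: cvg_col_mx; first exact: cvg_usubmx.
apply: cvgD; first exact: cvg_dsubmx.
apply: dir_deriv_seq => //; first exact: cvg_usubmx.
under eq_cvg do rewrite -linearB -linearZ /=.
exact: cvg_usubmx.
Qed.

End SumRule.

Section Neg.
Variables (R : realType) (n : nat).
Implicit Types (c : 'cV[R]_n -> R) (G : 'cV[R]_n -> 'cV[R]_n) (H : 'cV[R]_n -> 'M[R]_n).

Lemma C2_neg c G H : C2_with c G H ->
  C2_with (fun x => - c x) (fun x => - G x) (fun x => - H x).
Proof.
move=> hc; split.
- move=> x; split; first exact: (differentiableN (c_diff hc x)).
  move=> v; rewrite (diffN (c_diff hc x)) fctE (c_d hc) dotvNl //.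
- move=> x; split; first exact: (differentiableN (G_diff hc x)).
  move=> v; rewrite (diffN (G_diff hc x)) fctE (G_d hc) mulNmx //.
- by move=> x; apply: continuousN; exact: (H_cont hc).
Qed.

Lemma psi_neg (phi : 'cV[R]_n -> \bar R) c :
  (fun y => (phi y + (c y)%:E) + (- c y)%:E)%E = phi.
Proof.
apply: funext => y; case: (phi y) => [r| |] //=.
by rewrite -!EFinD addrK.
Qed.

Lemma Phi_neg G (z : 'cV[R]_(n + n)) : Phi (fun x => - G x) (Phi G z) = z.
Proof. by rewrite /Phi col_mxKu col_mxKd addrK vsubmxK. Qed.

Lemma Amx_neg_mul H x : Amx (fun x => - H x) x *m Amx H x = 1%:M.
Proof.
rewrite /Amx mulmx_block !mul1mx !mulmx1 !mul0mx !mulmx0 !addr0 add0r addNr.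
by rewrite -scalar_mx_block.
Qed.

Lemma Amx_mul_neg H x : Amx H x *m Amx (fun x => - H x) x = 1%:M.
Proof.
rewrite /Amx mulmx_block !mul1mx !mulmx1 !mul0mx !mulmx0 !addr0 add0r addrN.
by rewrite -scalar_mx_block.
Qed.

Lemma Amx_unit H x : Amx H x \in unitmx.
Proof.
by rewrite -row_free_unit; apply/row_freeP; exists (Amx (fun x => - H x) x); rewrite Amx_mul_neg.
Qed.

Lemma Amx_cvg H (zk : nat -> 'cV[R]_(n + n)) z :
  continuous H -> zk @ \oo --> z ->
  (fun k => Amx H (usubmx (zk k))) @ \oo --> Amx H (usubmx z).
Proof.
move=> hH hz; apply: cvg_block_mx; try exact: cvg_cst.
exact: (continuous_cvg _ (@hH _) (cvg_usubmx hz)).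
Qed.

End Neg.

Section Forward.
Variables (R : realType) (n : nat).
Variables (c : 'cV[R]_n -> R) (Gc : 'cV[R]_n -> 'cV[R]_n) (Hc : 'cV[R]_n -> 'M[R]_n).
Hypothesis hc : C2_with c Gc Hc.
Variable phi : 'cV[R]_n -> \bar R.
Let psi := fun y => (phi y + (c y)%:E)%E.
Let hn := C2_neg hc.

Lemma tangent_back z t : att_tangent psi (Phi Gc z) t ->
  att_tangent phi z (Amx (fun x => - Hc x) (usubmx z) *m t).
Proof.
move=> ht; have := tangent_sum hn ht.
by rewrite /psi psi_neg Phi_neg Phi_u.
Qed.

Lemma tangent_eq z : att_tangent psi (Phi Gc z) = mulmx (Amx Hc (usubmx z)) @` att_tangent phi z.
Proof.
apply/seteqP; split.
  move=> t /tangent_back ht; exists (Amx (fun x => - Hc x) (usubmx z) *m t) => //.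
  by rewrite mulmxA Amx_mul_neg mul1mx.
by move=> _ [w hw <-]; exact: (tangent_sum hc).
Qed.

Lemma rn_sum z v : att_rnormal phi z v ->
  att_rnormal psi (Phi Gc z) ((Amx (fun x => - Hc x) (usubmx z))^T *m v).
Proof.
move=> hv t /tangent_back ht.
by rewrite dotv_mulmx trmxK; exact: hv.
Qed.

Lemma n_sum z v : att_normal phi z v ->
  att_normal psi (Phi Gc z) ((Amx (fun x => - Hc x) (usubmx z))^T *m v).
Proof.
move=> [zk [vk [hatt hv hr]]].
exists (fun k => Phi Gc (zk k)), (fun k => (Amx (fun x => - Hc x) (usubmx (zk k)))^T *m vk k).
split.
- exact: (att_sum hc).
- apply: cvg_mulmx => //; apply: cvg_trmx; apply: Amx_cvg; last by case: hatt.
  exact: (H_cont hn).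
- by move=> k; exact: rn_sum.
Qed.

Lemma O_sum z : O_set phi z -> O_set psi (Phi Gc z).
Proof.
move=> [hg hZ]; split; first exact: (gph_sum hc).
by rewrite tangent_eq; apply: Znn_mul => //; exact: Amx_unit.
Qed.

Lemma SC_sum z L : SC phi z L -> SC psi (Phi Gc z) (mulmx (Amx Hc (usubmx z)) @` L).
Proof.
move=> [ZL [zk [hO hatt hd]]].
split; first by apply: Znn_mul => //; exact: Amx_unit.
exists (fun k => Phi Gc (zk k)); split.
- by move=> k; exact: O_sum.
- exact: (att_sum hc).
- under eq_cvg do rewrite tangent_eq.
  apply: dZ_mul_cvg => //.
  + by move=> k; case: (hO k).
  + by move=> k; exact: Amx_unit.
  + exact: Amx_unit.
  + by apply: Amx_cvg; [exact: (H_cont hc)| case: hatt].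
Qed.

End Forward.

Section Schwarz.
Variables (R : realType) (n : nat).
Variables (g : 'cV[R]_n -> R) (G : 'cV[R]_n -> 'cV[R]_n) (H : 'cV[R]_n -> 'M[R]_n).
Hypothesis hg : C2_with g G H.

Lemma line_derive (y0 u : 'cV[R]_n) (s : R) :
  is_derive s 1 (fun r : R => g (y0 + r *: u)) (dotv (G (y0 + s *: u)) u).
Proof.
set a := y0 + s *: u.
have eqf : (fun h : R => h^-1 *: (((fun r : R => g (y0 + r *: u)) \o shift s) (h *: 1)
             - g (y0 + s *: u))) =
           (fun h : R => h^-1 *: ((g \o shift a) (h *: u) - g a)).
  apply: funext => h /=; congr (_ *: (_ - _)); congr g.
  by rewrite /a -[h%:A]/(h * 1) mulr1 scalerDl addrCA.
have dg : derivable g a u by apply: diff_derivable; exact: (c_diff hg a).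
apply: DeriveDef.
  by rewrite /derivable eqf.
by rewrite /derive eqf -/(derive g a u) (deriveE _ (c_diff hg a)) (c_d hg).
Qed.

Lemma line_cont (y0 u : 'cV[R]_n) : continuous (fun r : R => g (y0 + r *: u)).
Proof.
move=> s; apply: differentiable_continuous; apply/derivable1_diffP.
by have [] := line_derive y0 u s.
Qed.

Lemma delta_bound (x u v : 'cV[R]_n) (eps : R) : 0 < eps -> exists2 d : R, 0 < d &
  forall t, 0 < t < d ->
  `|g (x + t *: u + t *: v) - g (x + t *: u) - g (x + t *: v) + g x
     - t ^+ 2 * dotv u (H x *m v)|
   <= t ^+ 2 * (n%:R * (2 * ((`|u| + `|v|) * (`|u| + `|v|))) * eps).
Proof.
move=> eps0.
have [dl dl0 hdl] := diff_eps (G_diff hg x) (G_d hg x) eps0.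
set U := `|u| + `|v|.
have U0 : 0 <= U by rewrite addr_ge0.
exists (dl / (U + 1)); first by rewrite divr_gt0 // ltr_wpDl.
move=> t /andP[t0 tdl].
have tU : t * U < dl.
  apply: le_lt_trans (_ : t * U <= t * (U + 1)) _; first by apply: ler_wpM2l; [exact: ltW | rewrite lerDl].
  by rewrite -ltr_pdivlMr ?ltr_wpDl.
pose psi := fun r : R => g ((x + t *: v) + r *: u) - g (x + r *: u).
pose dpsi := fun r : R => dotv (G ((x + t *: v) + r *: u)) u - dotv (G (x + r *: u)) u.
have hder : forall r : R, is_derive r (1 : R) psi (dpsi r).
  move=> r; have i1 := line_derive (x + t *: v) u r; have i2 := line_derive x u r.
  exact: is_deriveB.
have hcont : {within `[0, t], continuous psi}.
  apply: continuous_subspaceT => r; apply: differentiable_continuous.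
  by apply/derivable1_diffP; have [] := hder r.
have [s sin hs] := MVT_segment (ltW t0) (fun r _ => hder r) hcont.
have /andP[s0 st] : 0 <= s <= t by move: sin; rewrite in_itv.
have eD : g (x + t *: u + t *: v) - g (x + t *: u) - g (x + t *: v) + g x = dpsi s * t.
  move: hs; rewrite /psi subr0 !scale0r !addr0 => <-.
  by rewrite [x + t *: u + _]addrAC; ring.
set w1 := t *: v + s *: u; set w2 := s *: u.
have ew1 : x + t *: v + s *: u - x = w1 by rewrite -[x + _ + _]addrA addrAC subrr add0r.
have ew2 : x + s *: u - x = w2 by rewrite addrAC subrr add0r.
have nw1 : `|w1| <= t * U.
  rewrite /w1; apply: (@le_trans _ _ (`|t *: v| + `|s *: u|)); first exact: ler_normD.
  rewrite !normrZ (ger0_norm (ltW t0)) (ger0_norm s0).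
  rewrite /U mulrDr [t * `|u| + _]addrC lerD2l; exact: ler_wpM2r.
have nw2 : `|w2| <= t * U.
  rewrite /w2 normrZ ger0_norm //; apply: le_trans (_ : _ <= t * `|u|) _.
    exact: ler_wpM2r.
  by apply: ler_wpM2l; [exact: ltW | rewrite /U lerDl].
have h1 : `|G (x + t *: v + s *: u) - G x - H x *m w1| <= eps * `|w1|.
  by rewrite -ew1; apply: hdl; rewrite ew1; exact: le_lt_trans nw1 tU.
have h2 : `|G (x + s *: u) - G x - H x *m w2| <= eps * `|w2|.
  by rewrite -ew2; apply: hdl; rewrite ew2; exact: le_lt_trans nw2 tU.
set r1 := G (x + t *: v + s *: u) - G x - H x *m w1 in h1.
set r2 := G (x + s *: u) - G x - H x *m w2 in h2.
have eG : dpsi s = dotv (r1 - r2) u + t * dotv u (H x *m v).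
  rewrite /dpsi -dotvBl [dotv u _]dotvC -dotvZl -dotvDl; congr dotv.
  rewrite /r1 /r2 /w1 /w2 mulmxDr -!scalemxAr.
  by apply/matrixP => i j; rewrite !mxE; ring.
rewrite eD eG.
have -> : (dotv (r1 - r2) u + t * dotv u (H x *m v)) * t - t ^+ 2 * dotv u (H x *m v)
  = t * dotv (r1 - r2) u by ring.
rewrite normrM (ger0_norm (ltW t0)).
have hr : `|r1 - r2| <= 2 * (t * U) * eps.
  apply: le_trans (ler_normB _ _) _.
  apply: le_trans (lerD h1 h2) _.
  have e1 : eps * `|w1| <= eps * (t * U) by apply: ler_wpM2l => //; exact: ltW.
  have e2 : eps * `|w2| <= eps * (t * U) by apply: ler_wpM2l => //; exact: ltW.
  have -> : 2 * (t * U) * eps = eps * (t * U) + eps * (t * U) by ring.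
  exact: lerD.
have hd := dotv_bound (r1 - r2) u.
have hu : `|u| <= U by rewrite /U lerDl.
have hb : `|dotv (r1 - r2) u| <= n%:R * (2 * (t * U) * eps * U).
  apply: le_trans hd _; apply: ler_wpM2l; first exact: ler0n.
  by apply: ler_pM => //; exact: normr_ge0.
apply: le_trans (ler_wpM2l (ltW t0) hb) _.
have -> : t * (n%:R * (2 * (t * U) * eps * U)) = t ^+ 2 * (n%:R * (2 * (U * U)) * eps) by ring.
exact: lexx.
Qed.

Lemma dotv_sym (x u v : 'cV[R]_n) : dotv u (H x *m v) = dotv v (H x *m u).
Proof.
set a := dotv u (H x *m v); set b := dotv v (H x *m u).
set K := n%:R * (2 * ((`|u| + `|v|) * (`|u| + `|v|))).
have K0 : 0 <= K by rewrite mulr_ge0 // mulr_ge0 // mulr_ge0 // addr_ge0.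
have hK : forall eps : R, 0 < eps -> `|a - b| <= 2 * K * eps.
  move=> eps eps0.
  have [d1 d10 h1] := delta_bound x u v eps0.
  have [d2 d20 h2] := delta_bound x v u eps0.
  set t := Num.min d1 d2 / 2.
  have t0 : 0 < t by rewrite divr_gt0 // lt_min d10 d20.
  have tm : t < Num.min d1 d2 by rewrite /t ltr_pdivrMr // ltr_pMr ?lt_min ?d10 ?d20 // ltr1n.
  move: tm; rewrite lt_min => /andP[td1 td2].
  have := h1 t; rewrite t0 td1 => /(_ isT) {}h1.
  have := h2 t; rewrite t0 td2 => /(_ isT) {}h2.
  rewrite [`|v| + `|u|]addrC -/K in h2; rewrite -/K in h1.
  set D := g (x + t *: u + t *: v) - g (x + t *: u) - g (x + t *: v) + g x in h1.
  have eD : g (x + t *: v + t *: u) - g (x + t *: v) - g (x + t *: u) + g x = D.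
    by rewrite /D [x + t *: v + _]addrAC; ring.
  rewrite eD -/a -/b in h1 h2.
  have : `|t ^+ 2 * (a - b)| <= t ^+ 2 * (K * eps) + t ^+ 2 * (K * eps).
    have -> : t ^+ 2 * (a - b) = (D - t ^+ 2 * b) - (D - t ^+ 2 * a) by ring.
    by apply: le_trans (ler_normB _ _) _; exact: lerD.
  rewrite normrM (ger0_norm (sqr_ge0 t)) -mulrDr ler_pM2l; last by rewrite exprn_gt0.
  by have -> : 2 * K * eps = K * eps + K * eps by ring.
apply/eqP; rewrite -subr_eq0 -normr_le0; apply/ler_addgt0Pr => e e0; rewrite add0r.
have e1 : 0 < e / (2 * K + 1) by rewrite divr_gt0 // ltr_wpDl // mulr_ge0.
apply: le_trans (hK _ e1) _.
have nz : 2 * K + 1 != 0 by rewrite gt_eqF // ltr_wpDl // mulr_ge0.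
rewrite -[X in _ <= X](divfK nz).
by rewrite mulrC; apply: ler_wpM2l; [exact: ltW | rewrite lerDl].
Qed.

Lemma dotv_delta (m : nat) (i : 'I_m) (w : 'cV[R]_m) : dotv (delta_mx i 0) w = w i 0.
Proof.
rewrite /dotv (bigD1 i) //= !mxE !eqxx mul1r big1 ?addr0 //.
by move=> k /negbTE ki; rewrite mxE ki mul0r.
Qed.

Lemma H_sym x : (H x)^T = H x.
Proof.
apply/matrixP => i j; rewrite mxE.
have := dotv_sym x (delta_mx i 0) (delta_mx j 0).
by rewrite !dotv_delta !mulmx_delta.
Qed.

End Schwarz.

Section Final.
Variables (R : realType) (n : nat).

Lemma invmx_of (m : nat) (X Y : 'M[R]_m) : X *m Y = 1%:M -> invmx X = Y.
Proof.
move=> XY; have uX : X \in unitmx by rewrite -row_free_unit; apply/row_freeP; exists Y.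
by rewrite -[invmx X]mulmx1 -XY mulmxA mulVmx // mul1mx.
Qed.

Lemma swap_id (A : 'M[R]_(n + n)) (H : 'M[R]_n) :
  A = block_mx 1%:M 0 H 1%:M -> H^T = H ->
  forall w : 'cV[R]_(n + n), A^T *m swapneg (A *m w) = swapneg w.
Proof.
move=> -> sH w; rewrite -[w in LHS]vsubmxK mul_block_col !mul1mx mul0mx addr0.
rewrite /swapneg col_mxKu col_mxKd tr_block_mx trmx1 trmx0 sH mul_block_col.
by rewrite !mul1mx mul0mx add0r mulmxN addrC addKr.
Qed.

Lemma rD_lemma (A : 'M[R]_(n + n)) (N1 N2 : set 'cV[R]_(n + n)) :
  A \in unitmx -> (forall w, A^T *m swapneg (A *m w) = swapneg w) ->
  N2 = mulmx (invmx A^T) @` N1 ->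
  [set w | N2 (swapneg w)] = mulmx A @` [set w | N1 (swapneg w)].
Proof.
move=> uA hS ->; have uAt : A^T \in unitmx by rewrite unitmx_tr.
apply/seteqP; split.
  move=> w [y hy ey]; exists (invmx A *m w); last by rewrite mulmxA mulmxV // mul1mx.
  rewrite /= -hS mulmxA mulmxV // mul1mx -ey mulmxA mulmxV // mul1mx //.
move=> _ [w hw <-]; rewrite /=; exists (swapneg w) => //.
by rewrite -hS mulmxA mulVmx // mul1mx.
Qed.

Lemma adjoint_lemma (A : 'M[R]_(n + n)) (L : set 'cV[R]_(n + n)) :
  A \in unitmx -> (forall w, A^T *m swapneg (A *m w) = swapneg w) ->
  adjoint (mulmx A @` L) = mulmx A @` adjoint L.
Proof.
move=> uA hS; apply/seteqP; split.
  move=> w hw; exists (invmx A *m w); last by rewrite mulmxA mulmxV // mul1mx.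
  move=> v Lv; rewrite -hS mulmxA mulmxV // mul1mx dotv_mulmx trmxK.
  by apply: (hw (A *m v)); exists v.
move=> _ [w hw <-] _ [v Lv <-].
by rewrite dotvC dotv_mulmx hS dotvC; exact: (hw v Lv).
Qed.

End Final.

Unset Implicit Arguments.

Theorem proposition3p2 (R : realType) (n : nat)
  (f : 'cV[R]_n -> \bar R) (g : 'cV[R]_n -> R)
  (G : 'cV[R]_n -> 'cV[R]_n) (H : 'cV[R]_n -> 'M[R]_n)
  (xb xbs : 'cV[R]_n) :
  (forall x, f x != -oo%E) ->
  lim_subdiff f xb xbs ->
  C2_with g G H ->
  let h := fun x => (f x + (g x)%:E)%E in
  let A : 'M[R]_(n + n) := block_mx 1%:M 0 (H xb) 1%:M in
  let zf : 'cV[R]_(n + n) := col_mx xb xbs in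
  let zh : 'cV[R]_(n + n) := col_mx xb (xbs + G xb) in
  att_tangent h zh = mulmx A @` att_tangent f zf /\
  att_rnormal h zh = mulmx (invmx A^T) @` att_rnormal f zf /\
  att_normal h zh = mulmx (invmx A^T) @` att_normal f zf /\
  gph_D h zh = mulmx A @` gph_D f zf /\
  gph_rDstar h zh = mulmx A @` gph_rDstar f zf /\
  gph_Dstar h zh = mulmx A @` gph_Dstar f zf /\
  SC h zh = (fun L => mulmx A @` L) @` SC f zf /\
  SCstar h zh = (fun L => mulmx A @` adjoint L) @` SC f zf.
Proof.
move=> _ _ hC2 h A zf zh.
have hn := C2_neg hC2.
have ezh : zh = Phi G zf by rewrite /Phi /zf col_mxKu col_mxKd.
have ezf : Phi (fun x => - G x) zh = zf by rewrite ezh Phi_neg.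
have uz : usubmx zf = xb by rewrite col_mxKu.
have uzh : usubmx zh = xb by rewrite col_mxKu.
have eA : A = Amx H xb by [].
have uA : A \in unitmx by rewrite eA; exact: Amx_unit.
have eH : (fun x => - - H x) = H by apply: funext => x; rewrite opprK.
have hf : (fun y => (h y + (- g y)%:E)%E) = f by exact: psi_neg.
have eB : invmx A^T = (Amx (fun x => - H x) xb)^T.
  by apply: invmx_of; rewrite -trmx_mul eA Amx_neg_mul trmx1.
have BAt : invmx A^T *m A^T = 1%:M by rewrite mulVmx // unitmx_tr.
have hS : forall w, A^T *m swapneg (A *m w) = swapneg w.
  by apply: swap_id => //; exact: (H_sym hC2).
have eT : att_tangent h zh = mulmx A @` att_tangent f zf.
  by rewrite ezh (tangent_eq hC2) uz.
have eRN : att_rnormal h zh = mulmx (invmx A^T) @` att_rnormal f zf.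
  apply/seteqP; split.
    move=> v hv; exists (A^T *m v); last by rewrite mulmxA BAt mul1mx.
    have := rn_sum hn (phi := h) hv; rewrite /= eH uzh -eA.
    by rewrite hf ezf.
  move=> _ [v hv <-]; rewrite eB ezh -{1}uz; exact: (rn_sum hC2).
have eN : att_normal h zh = mulmx (invmx A^T) @` att_normal f zf.
  apply/seteqP; split.
    move=> v hv; exists (A^T *m v); last by rewrite mulmxA BAt mul1mx.
    have := n_sum hn (phi := h) hv; rewrite /= eH uzh -eA.
    by rewrite hf ezf.
  move=> _ [v hv <-]; rewrite eB ezh -{1}uz; exact: (n_sum hC2).
have eSC : SC h zh = (fun L => mulmx A @` L) @` SC f zf.
  apply/seteqP; split.
    move=> L hL; exists (mulmx (Amx (fun x => - H x) xb) @` L).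
      have := SC_sum hn (phi := h) hL; rewrite /= uzh.
      by rewrite hf ezf.
    apply/seteqP; split.
      move=> _ [_ [v hv <-] <-]; rewrite mulmxA eA Amx_mul_neg mul1mx //.
    move=> v hv; exists (Amx (fun x => - H x) xb *m v); first by exists v.
    by rewrite mulmxA eA Amx_mul_neg mul1mx.
  move=> _ [L hL <-]; rewrite ezh eA -{1}uz; exact: (SC_sum hC2).
split; first exact: eT.
split; first exact: eRN.
split; first exact: eN.
split; first exact: eT.
split; first by rewrite /gph_rDstar; apply: rD_lemma.
split; first by rewrite /gph_Dstar; apply: rD_lemma.
split; first exact: eSC.
rewrite /SCstar eSC; apply/seteqP; split.
  by move=> _ [_ [L hL <-] <-]; exists L => //; rewrite adjoint_lemma.
by move=> _ [L hL <-]; exists (mulmx A @` L); [exists L | rewrite adjoint_lemma].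
Qed.
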